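(* Let $n\geq1$ be an integer and $z\in\mathbb{C}$ with $|z|<1$. Put $p=(n+1)(1-|z|)$ and \[ m(p)=\begin{cases}(e\,p)^{-1}, & p\geq e^{-1},\\ |\log p|, & p<e^{-1}.\end{cases} \] Then $|R_n(z)|<m(p)$.
   Context: $R_n(z)=\sum_{k=n+1}^\infty \frac{z^k}{k}$, the tail of the Taylor series of $-\log(1-z)$. *)

(* Defs.v *)
From Stdlib Require Import Reals.
From Coquelicot Require Import Coquelicot.
Open Scope R_scope.

Definition logterm (z : C) (k : nat) : C := Cdiv (Cpow z k) (RtoC (INR k)).

(* R_n(z) = sum_{k=n+1}^oo z^k / k.  Coquelicot's total [Series] is real-valued,
   so the complex sum is assembled from the (real) series of real and imaginary
   parts of the terms z^(n+1+j)/(n+1+j), j >= 0 (both converge absolutely for |z|<1). *)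
Definition Rtail (n : nat) (z : C) : C :=
  (Series (fun j : nat => fst (logterm z (n + 1 + j)%nat)),
   Series (fun j : nat => snd (logterm z (n + 1 + j)%nat))).

Definition mfun (p : R) : R :=
  if Rle_dec (/ exp 1) p then / (exp 1 * p) else Rabs (ln p).

(* Main.v *)
Require Import Defs.
From Stdlib Require Import Reals Lra Lia Psatz.
From Coquelicot Require Import Coquelicot.
Open Scope R_scope.

Definition Tsum (n : nat) (x : R) : R :=
  Series (fun j : nat => x ^ (n + 1 + j) / INR (n + 1 + j)).

Lemma Series_le_gen (a b : nat -> R) :
  (forall k, a k <= b k) -> ex_series a -> ex_series b -> Series a <= Series b.
Proof.
  intros H Ha Hb.
  assert (0 <= Series (fun k => b k - a k)).
  { replace 0 with (Series (fun _ : nat => 0)).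
    - apply Series_le. intros k; specialize (H k); lra.
      exact (ex_series_minus b a Hb Ha).
    - unfold Series. rewrite Lim_seq_ext with (v := fun _ => 0).
      rewrite Lim_seq_const. reflexivity.
      intros k. rewrite sum_n_const. simpl. ring. }
  rewrite Series_minus in H0; auto. lra.
Qed.

Lemma norm_R (x : R) : norm x = Rabs x.
Proof. reflexivity. Qed.

Lemma ex_tail (n : nat) (x : R) : 0 <= x < 1 ->
  ex_series (fun j : nat => x ^ (n + 1 + j) / INR (n + 1 + j)).
Proof.
  intros Hx.
  apply (@ex_series_le R_AbsRing R_CompleteNormedModule) with (b := fun j => x ^ j).
  - intros j. rewrite norm_R.
    assert (HN : 1 <= INR (n + 1 + j)).
    { replace 1 with (INR 1) by reflexivity. apply le_INR. lia. }
    assert (0 <= x ^ (n + 1 + j)) by (apply pow_le; lra).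
    rewrite Rabs_pos_eq.
    + apply Rle_trans with (x ^ (n + 1 + j)).
      * unfold Rdiv. rewrite <- (Rmult_1_r (x ^ (n+1+j))) at 2.
        apply Rmult_le_compat_l; auto.
        rewrite <- Rinv_1. apply Rinv_le_contravar; lra.
      * replace (n + 1 + j)%nat with (j + (n + 1))%nat by lia.
        rewrite pow_add. rewrite <- (Rmult_1_r (x ^ j)) at 2.
        apply Rmult_le_compat_l. apply pow_le; lra.
        rewrite <- (pow1 (n+1)). apply pow_incr; lra.
    + apply Rmult_le_pos; auto. left; apply Rinv_0_lt_compat; lra.
  - apply ex_series_geom. rewrite Rabs_pos_eq; lra.
Qed.

Lemma Cmod_logterm (z : C) (k : nat) : (1 <= k)%nat ->
  Cmod (logterm z k) = Cmod z ^ k / INR k.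
Proof.
  intros Hk. unfold logterm.
  assert (HI : 0 < INR k) by (apply lt_0_INR; lia).
  rewrite Cmod_div.
  - rewrite Cmod_pow, Cmod_R, Rabs_pos_eq; lra.
  - intros H. injection H. lra.
Qed.

Lemma Rtail_le (n : nat) (z : C) : Cmod z < 1 ->
  Cmod (Rtail n z) <= Tsum n (Cmod z).
Proof.
  intros Hz.
  set (r := Cmod z).
  assert (Hr : 0 <= r < 1) by (split; [apply Cmod_ge_0|exact Hz]).
  set (w := fun j => logterm z (n + 1 + j)).
  assert (Hw : forall j, Cmod (w j) = r ^ (n + 1 + j) / INR (n + 1 + j)).
  { intros j. unfold w. apply Cmod_logterm. lia. }
  assert (Ht := ex_tail n r Hr).
  assert (E1 : ex_series (fun j => fst (w j))).
  { apply (@ex_series_le R_AbsRing R_CompleteNormedModule) with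
      (b := fun j => r ^ (n + 1 + j) / INR (n + 1 + j)); auto.
    intros j. rewrite norm_R, <- Hw. apply re_le_Cmod. }
  assert (E2 : ex_series (fun j => snd (w j))).
  { apply (@ex_series_le R_AbsRing R_CompleteNormedModule) with
      (b := fun j => r ^ (n + 1 + j) / INR (n + 1 + j)); auto.
    intros j. rewrite norm_R, <- Hw. eapply Rle_trans; [apply Rmax_r|apply Rmax_Cmod]. }
  set (R1 := Series (fun j => fst (w j))).
  set (R2 := Series (fun j => snd (w j))).
  assert (HR : Rtail n z = (R1, R2)) by reflexivity.
  rewrite HR.
  set (M := Cmod (R1, R2)).
  assert (HM0 : 0 <= M) by apply Cmod_ge_0.
  assert (HT0 : 0 <= Tsum n r).
  { unfold Tsum. replace 0 with (Series (fun _ : nat => 0)).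
    - apply Series_le; auto.
      intros j. rewrite <- Hw. split; [lra|apply Cmod_ge_0].
    - unfold Series. rewrite Lim_seq_ext with (v := fun _ => 0).
      rewrite Lim_seq_const. reflexivity.
      intros k. rewrite sum_n_const. simpl. ring. }
  assert (Key : M * M <= M * Tsum n r).
  { assert (Hsq : M * M = R1 * R1 + R2 * R2).
    { unfold M. rewrite <- Rsqr_def, Rsqr_pow2, Cmod2_alt. simpl. ring. }
    rewrite Hsq.
    assert (Hs : R1 * R1 + R2 * R2 =
                 Series (fun j => R1 * fst (w j) + R2 * snd (w j))).
    { rewrite Series_plus.
      - rewrite !Series_scal_l. reflexivity.
      - exact (ex_series_scal_l R1 _ E1).
      - exact (ex_series_scal_l R2 _ E2). }
    rewrite Hs. unfold Tsum. rewrite <- Series_scal_l.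
    apply Series_le_gen.
    - intros j. rewrite <- Hw.
      assert (Hc := re_le_Cmod (Cconj (R1, R2) * w j)%C).
      rewrite Cmod_mult, Cmod_conj in Hc. fold M in Hc.
      destruct (w j) as [w1 w2]. simpl in *.
      apply Rabs_le_between in Hc. lra.
    - exact (ex_series_plus _ _ (ex_series_scal_l R1 _ E1) (ex_series_scal_l R2 _ E2)).
    - exact (ex_series_scal_l M _ Ht). }
  destruct HM0 as [HM0|HM0].
  - apply Rmult_le_reg_l with M; auto.
  - rewrite <- HM0. exact HT0.
Qed.

Lemma Tsum_bound (n : nat) (x c : R) : 0 <= x < 1 ->
  (forall k : nat, (n + 1 <= k)%nat ->
     0 < (1 - x) * INR k + c /\
     / INR k <= / ((1 - x) * INR k + c) - x * / ((1 - x) * INR (S k) + c)) ->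
  Tsum n x <= x ^ (n + 1) * / ((1 - x) * INR (n + 1) + c).
Proof.
  intros Hx H.
  set (b := fun k : nat => / ((1 - x) * INR k + c)).
  set (f := fun j : nat => x ^ (n + 1 + j) / INR (n + 1 + j)).
  assert (Hb : forall k, (n + 1 <= k)%nat -> 0 <= b k).
  { intros k Hk. unfold b. left. apply Rinv_0_lt_compat. apply H; auto. }
  assert (Hstep : forall j, f j <= x ^ (n + 1 + j) * b (n + 1 + j)%nat
                              - x ^ (n + 1 + S j) * b (n + 1 + S j)%nat).
  { intros j. unfold f. destruct (H (n + 1 + j)%nat) as [_ H2]; [lia|].
    replace (n + 1 + S j)%nat with (S (n + 1 + j)) by lia.
    unfold b. simpl pow.
    assert (0 <= x ^ (n + 1 + j)) by (apply pow_le; lra).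
    unfold Rdiv.
    replace (x ^ (n + 1 + j) * / ((1 - x) * INR (n + 1 + j) + c) -
             x * x ^ (n + 1 + j) * / ((1 - x) * INR (S (n + 1 + j)) + c))
      with (x ^ (n + 1 + j) * (/ ((1 - x) * INR (n + 1 + j) + c) -
             x * / ((1 - x) * INR (S (n + 1 + j)) + c))) by ring.
    apply Rmult_le_compat_l; auto. }
  assert (Hpart : forall M, sum_n f M <= x ^ (n + 1) * b (n + 1)%nat
                     - x ^ (n + 1 + S M) * b (n + 1 + S M)%nat).
  { induction M.
    - rewrite sum_O. specialize (Hstep 0%nat).
      replace (n + 1 + 0)%nat with (n + 1)%nat in Hstep by lia. exact Hstep.
    - rewrite sum_Sn. specialize (Hstep (S M)). change plus with Rplus. lra. }
  assert (Hpart' : forall M, sum_n f M <= x ^ (n + 1) * b (n + 1)%nat).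
  { intros M. specialize (Hpart M).
    assert (0 <= x ^ (n + 1 + S M) * b (n + 1 + S M)%nat).
    { apply Rmult_le_pos. apply pow_le; lra. apply Hb; lia. }
    lra. }
  assert (Hs := Series_correct f (ex_tail n x Hx)).
  assert (Hl := is_lim_seq_le (sum_n f) (fun _ => x ^ (n + 1) * b (n + 1)%nat)
                  (Series f) (x ^ (n + 1) * b (n + 1)%nat) Hpart' Hs
                  (is_lim_seq_const _)).
  simpl in Hl. exact Hl.
Qed.

Lemma incr_from_deriv (f df : R -> R) (a b : R) : a <= b ->
  (forall x, a <= x <= b -> is_derive f x (df x)) ->
  (forall x, a <= x <= b -> 0 <= df x) -> f a <= f b.
Proof.
  intros Hab Hd Hp.
  destruct (MVT_gen f a b df) as [c [Hc Heq]].
  - intros x Hx. rewrite Rmin_left, Rmax_right in Hx by lra. apply Hd. lra.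
  - intros x Hx. rewrite Rmin_left, Rmax_right in Hx by lra.
    apply continuity_pt_filterlim. apply (@ex_derive_continuous R_AbsRing R_NormedModule).
    eexists. apply Hd. lra.
  - rewrite Rmin_left, Rmax_right in Hc by lra.
    assert (0 <= df c * (b - a)) by (apply Rmult_le_pos; [apply Hp; lra| lra]).
    lra.
Qed.

Lemma exp_m_ge1 (y : R) : 0 <= y -> 1 - y <= exp (- y).
Proof.
  intros Hy. destruct (Req_dec y 0) as [->|Hn].
  - rewrite Ropp_0, exp_0. lra.
  - assert (H := exp_ineq1 (- y)). lra.
Qed.

Lemma exp_m_le2 (y : R) : 0 <= y -> exp (- y) <= 1 - y + y^2/2.
Proof.
  intros Hy.
  assert (H := incr_from_deriv (fun t => 1 - t + t^2/2 - exp (- t))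
                 (fun t => -1 + t + exp (- t)) 0 y Hy).
  simpl in H. rewrite Ropp_0, exp_0 in H.
  assert (0 <= 1 - y + y * (y * 1) / 2 - exp (- y)); [|simpl; lra].
  replace 0 with (1 - 0 + 0 * (0 * 1) / 2 - 1) by field.
  apply H.
  - intros x _. auto_derive; auto. field.
  - intros x Hx. assert (H1 := exp_m_ge1 x). lra.
Qed.

Lemma exp_m_ge3 (y : R) : 0 <= y -> 1 - y + y^2/2 - y^3/6 <= exp (- y).
Proof.
  intros Hy.
  assert (H := incr_from_deriv (fun t => exp (- t) - (1 - t + t^2/2 - t^3/6))
                 (fun t => 1 - t + t^2/2 - exp (- t)) 0 y Hy).
  simpl in H. rewrite Ropp_0, exp_0 in H.
  assert (0 <= exp (- y) - (1 - y + y * (y * 1) / 2 - y * (y * (y * 1)) / 6)); [|simpl; lra].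
  replace 0 with (1 - (1 - 0 + 0 * (0 * 1) / 2 - 0 * (0 * (0 * 1)) / 6)) by field.
  apply H.
  - intros x _. auto_derive; auto. field.
  - intros x Hx. assert (H1 := exp_m_le2 x). simpl in H1. lra.
Qed.

Lemma step_ok (a c k : R) : 0 < k -> 0 < a * k + c -> 0 < a * (k + 1) + c ->
  c * (a + c) <= a * k * (1 - a - c) ->
  / k <= / (a * k + c) - (1 - a) * / (a * (k + 1) + c).
Proof.
  intros Hk H1 H2 H.
  assert (E : / (a * k + c) - (1 - a) * / (a * (k + 1) + c) - / k =
              (a * k * (1 - a - c) - c * (a + c)) / (k * (a * k + c) * (a * (k + 1) + c))).
  { field. lra. }
  assert (0 <= (a * k * (1 - a - c) - c * (a + c)) / (k * (a * k + c) * (a * (k + 1) + c))).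
  { apply Rmult_le_pos. lra. left. apply Rinv_0_lt_compat.
    apply Rmult_lt_0_compat; [apply Rmult_lt_0_compat|]; lra. }
  lra.
Qed.

Lemma pow_lt_compat (u v : R) (k : nat) : 0 <= u < v -> u ^ S k < v ^ S k.
Proof.
  intros H. induction k.
  - simpl. lra.
  - change (u * u ^ S k < v * v ^ S k).
    assert (0 <= u ^ S k) by (apply pow_le; lra).
    apply Rle_lt_trans with (u * v ^ S k).
    + apply Rmult_le_compat_l; lra.
    + apply Rmult_lt_compat_r; [|lra]. apply pow_lt; lra.
Qed.

Lemma exp_pow_INR (y : R) (k : nat) : exp y ^ k = exp (y * INR k).
Proof.
  induction k.
  - simpl. rewrite Rmult_0_r, exp_0. reflexivity.
  - rewrite S_INR. simpl. rewrite IHk.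
    rewrite <- exp_plus. f_equal. ring.
Qed.

Lemma xN_lt (n : nat) (x : R) : 0 <= x < 1 ->
  x ^ (n + 1) < exp (- (INR (n + 1) * (1 - x))).
Proof.
  intros Hx.
  assert (Hx2 : x < exp (- (1 - x))).
  { assert (H := exp_ineq1 (- (1 - x))). lra. }
  replace (n + 1)%nat with (S n) by lia.
  replace (- (INR (S n) * (1 - x))) with (- (1 - x) * INR (S n)) by ring.
  rewrite <- exp_pow_INR. apply pow_lt_compat. lra.
Qed.

Lemma poly_key (p : R) : 1/3 <= p <= 1 ->
  p * (1 - (1/3 + p/2 + p^3/6)/2) <= (1/3 + p/2 + p^3/6)^2.
Proof.
  intros Hp.
  assert (0 <= p^6) by (apply pow_le; lra).
  assert (H3: 1/27 + (p - 1/3)/3 <= p^3).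
  { assert (E: p^3 - (1/27 + (p - 1/3)/3) = (p-1/3)^2 * (p + 2/3)) by field.
    assert (0 <= (p-1/3)^2 * (p + 2/3)) by (apply Rmult_le_pos; [apply pow2_ge_0|lra]). lra. }
  assert (H4: 1/81 + 4*(p-1/3)/27 <= p^4).
  { assert (E: p^4 = p * p^3) by ring. rewrite E.
    assert (p * p^3 >= p * (1/27 + (p - 1/3)/3)) by (apply Rle_ge, Rmult_le_compat_l; lra).
    nra. }
  assert (0 <= (p - 1/3 - 0.0926)^2) by apply pow2_ge_0.
  assert (E : (1/3 + p/2 + p^3/6)^2 - p * (1 - (1/3 + p/2 + p^3/6)/2)
              = 1/9 - p/2 + p^2/2 + p^3/9 + p^4/4 + p^6/36) by field.
  nra.
Qed.

Lemma caseC (n : nat) (x : R) : (1 <= n)%nat -> 0 <= x < 1 ->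
  / exp 1 <= INR (n + 1) * (1 - x) ->
  Tsum n x < / (exp 1 * (INR (n + 1) * (1 - x))).
Proof.
  intros Hn Hx Hp.
  set (N := INR (n + 1)) in *.
  set (a := 1 - x) in *.
  set (p := N * a) in *.
  assert (HN : 2 <= N).
  { unfold N. replace 2 with (INR 2) by (simpl; ring). apply le_INR. lia. }
  assert (Ha : 0 < a) by (unfold a; lra).
  assert (Hp0 : 0 < p) by (unfold p; nra).
  assert (HE : 0 < exp 1) by apply exp_pos.
  assert (HE3 := exp_le_3).
  assert (Hp3 : 1/3 <= p).
  { apply Rle_trans with (/ exp 1); auto.
    replace (1/3) with (/ 3) by field. apply Rinv_le_contravar; lra. }
  assert (Hap : a <= p / 2) by (unfold p; apply Rmult_le_reg_l with 2; [lra|]; field_simplify; nra).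
  assert (HxN := xN_lt n x Hx). fold N a p in HxN.
  assert (HxN0 : 0 <= x ^ (n + 1)) by (apply pow_le; lra).
  assert (Hkey : forall c, 0 <= c -> c * (a + c) <= p * (1 - a - c) ->
            Tsum n x <= x ^ (n + 1) * / (p + c)).
  { intros c Hc Hcond.
    replace p with ((1 - x) * INR (n + 1)) by (unfold p, N, a; ring).
    apply Tsum_bound; auto.
    intros k Hk.
    assert (HkN : N <= INR k) by (apply le_INR; exact Hk).
    assert (Hk1 : 1 <= INR k) by lra.
    assert (HX : p <= a * INR k) by (unfold p; nra).
    fold a. split; [nra|].
    rewrite S_INR.
    replace (x * / (a * (INR k + 1) + c)) with ((1 - a) * / (a * (INR k + 1) + c)) by (unfold a; ring).
    apply step_ok; try nra. }
  destruct (Rle_lt_dec 1 p) as [H1|H1].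
  -
    assert (Hb : Tsum n x <= x ^ (n + 1) * / (p + 0)).
    { apply Hkey. lra. assert (0 <= 1 - a) by (unfold a; lra). nra. }
    rewrite Rplus_0_r in Hb.
    assert (Hm : exp (- p) <= exp (- 1)).
    { destruct (Rle_lt_or_eq_dec _ _ H1) as [Hl|He].
      - left. apply exp_increasing. lra.
      - right. rewrite <- He. reflexivity. }
    replace (exp (-1)) with (/ exp 1) in Hm by (rewrite <- exp_Ropp; reflexivity).
    apply Rle_lt_trans with (1 := Hb).
    rewrite Rinv_mult.
    apply Rmult_lt_compat_r. apply Rinv_0_lt_compat; lra.
    lra.
  -
    set (P := 1/3 + p/2 + p^3/6).
    assert (HP : 0 < P) by (unfold P; assert (0 <= p^3) by (apply pow_le; lra); lra).
    assert (HP1 : P <= 1).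
    { unfold P. assert (p^3 <= 1). { rewrite <- (pow1 3). apply pow_incr. lra. } lra. }
    assert (Hpk := poly_key p ltac:(lra)). fold P in Hpk.
    set (c := p * (1 - P) / P).
    assert (Hc0 : 0 <= c).
    { unfold c. apply Rmult_le_pos; [nra|]. left; apply Rinv_0_lt_compat; lra. }
    assert (HcP : c * P = p * (1 - P)) by (unfold c; field; lra).
    assert (Hcond : c * (a + c) <= p * (1 - a - c)).
    {
      assert (c * c + c * (p/2 + p) + p * (p/2) <= p).
      {
        apply Rmult_le_reg_r with (P * P). nra.
        replace ((c * c + c * (p / 2 + p) + p * (p / 2)) * (P * P))
          with ((c*P) * (c*P) + (c*P) * P * (p/2 + p) + p * (p/2) * (P * P)) by ring.
        rewrite HcP. nra. }
      nra. }
    assert (Hb := Hkey c Hc0 Hcond).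
    assert (Hpc : p + c = p / P) by (apply Rmult_eq_reg_r with P; [|lra]; field_simplify; [|lra]; nra).
    rewrite Hpc in Hb.
    apply Rle_lt_trans with (1 := Hb).
    assert (Hexp : P <= exp (- (1 - p))).
    { assert (H := exp_m_ge3 (1 - p) ltac:(lra)).
      replace (1 - (1 - p) + (1 - p) ^ 2 / 2 - (1 - p) ^ 3 / 6) with P in H by (unfold P; field).
      exact H. }
    assert (Hexp2 : exp 1 * exp (- p) * P <= 1).
    { rewrite <- exp_plus. replace (1 + - p) with (- - (1 - p)) by ring.
      rewrite exp_Ropp.
      assert (0 < exp (- (1 - p))) by apply exp_pos.
      apply Rmult_le_reg_r with (exp (- (1 - p))); auto.
      rewrite Rmult_1_l, Rmult_assoc, (Rmult_comm P), <- Rmult_assoc, Rinv_l by lra.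
      lra. }
    assert (Hfin : exp 1 * x ^ (n + 1) * P < 1).
    { apply Rlt_le_trans with (2 := Hexp2).
      apply Rmult_lt_compat_r; auto. apply Rmult_lt_compat_l; auto. }
    replace (x ^ (n + 1) * / (p / P)) with ((exp 1 * x ^ (n + 1) * P) * / (exp 1 * p))
      by (field; lra).
    rewrite <- (Rmult_1_l (/ (exp 1 * p))) at 2.
    apply Rmult_lt_compat_r; auto.
    apply Rinv_0_lt_compat. nra.
Qed.

Definition Acoef (n : nat) (k : nat) : R := if Nat.leb (n + 1) k then / INR k else 0.

Lemma Acoef_bound (n k : nat) : 0 <= Acoef n k <= 1.
Proof.
  unfold Acoef. destruct (Nat.leb_spec (n + 1) k) as [H|H].
  - assert (1 <= INR k) by (replace 1 with (INR 1) by reflexivity; apply le_INR; lia).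
    split. left; apply Rinv_0_lt_compat; lra.
    rewrite <- Rinv_1. apply Rinv_le_contravar; lra.
  - lra.
Qed.

Lemma PSd_bound (n k : nat) : 0 <= PS_derive (Acoef n) k <= 1.
Proof.
  unfold PS_derive, Acoef. destruct (Nat.leb_spec (n + 1) (S k)) as [H|H].
  - assert (0 < INR (S k)) by (apply lt_0_INR; lia).
    rewrite Rinv_r by lra. lra.
  - rewrite Rmult_0_r. lra.
Qed.

Lemma Acoef_radius (n : nat) (x : R) : Rabs x < 1 -> Rbar_lt (Rabs x) (CV_radius (Acoef n)).
Proof.
  intros Hx.
  destruct (CV_radius_bounded (Acoef n)) as [Hub _].
  assert (H1 : Rbar_le 1 (CV_radius (Acoef n))).
  { apply Hub. exists 1. intros k. rewrite pow1, Rmult_1_r.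
    destruct (Acoef_bound n k). rewrite Rabs_pos_eq; lra. }
  assert (Ha := Rabs_pos x).
  destruct (CV_radius (Acoef n)) as [l| |]; simpl in *; try lra; try contradiction; exact I.
Qed.

Lemma Tsum_PSeries (n : nat) (x : R) : 0 <= x < 1 -> Tsum n x = PSeries (Acoef n) x.
Proof.
  intros Hx. unfold PSeries, Tsum.
  assert (Hex : ex_series (fun k => Acoef n k * x ^ k)).
  { apply ex_series_Rabs. apply CV_disk_inside. apply Acoef_radius.
    rewrite Rabs_pos_eq; lra. }
  rewrite (Series_incr_n (fun k => Acoef n k * x ^ k) (n + 1)); [|lia|exact Hex].
  replace (sum_f_R0 (fun k => Acoef n k * x ^ k) (Init.Nat.pred (n + 1))) with 0.
  - rewrite Rplus_0_l. apply Series_ext. intros j.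
    unfold Acoef. destruct (Nat.leb_spec (n + 1) (n + 1 + j)) as [H|H]; [|lia].
    unfold Rdiv. ring.
  - replace (Init.Nat.pred (n + 1)) with n by lia.
    rewrite sum_eq_R0. reflexivity.
    intros k Hk. unfold Acoef. destruct (Nat.leb_spec (n + 1) k) as [H|H]; [lia|]. ring.
Qed.

Lemma PSd_le (n : nat) (x : R) : 0 <= x < 1 -> PSeries (PS_derive (Acoef n)) x <= / (1 - x).
Proof.
  intros Hx. unfold PSeries.
  rewrite <- (is_series_unique _ _ (is_series_geom x ltac:(rewrite Rabs_pos_eq; lra))).
  apply Series_le.
  - intros k. destruct (PSd_bound n k). assert (0 <= x ^ k) by (apply pow_le; lra).
    split. apply Rmult_le_pos; auto.
    rewrite <- (Rmult_1_l (x ^ k)) at 2. apply Rmult_le_compat_r; auto.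
  - apply ex_series_geom. rewrite Rabs_pos_eq; lra.
Qed.

Lemma Tsum_mono (n : nat) (u v : R) : 0 <= u <= v -> v < 1 ->
  Tsum n v + ln (1 - v) <= Tsum n u + ln (1 - u).
Proof.
  intros Huv Hv.
  rewrite !Tsum_PSeries by lra.
  assert (H := incr_from_deriv (fun t => - PSeries (Acoef n) t - ln (1 - t))
                 (fun t => / (1 - t) - PSeries (PS_derive (Acoef n)) t) u v (proj2 Huv)).
  cut (- PSeries (Acoef n) u - ln (1 - u) <= - PSeries (Acoef n) v - ln (1 - v)); [lra|].
  apply H.
  - intros t Ht.
    assert (Hd1 := is_derive_PSeries (Acoef n) t (Acoef_radius n t ltac:(rewrite Rabs_pos_eq; lra))).
    assert (Hd2 : is_derive (fun t => ln (1 - t)) t (- / (1 - t))).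
    { auto_derive. lra. field. lra. }
    assert (Hd := is_derive_minus _ _ t _ _ (is_derive_opp _ t _ Hd1) Hd2).
    unfold minus, opp, plus in Hd; simpl in Hd.
    simpl.
    replace (/ (1 - t) - PSeries (PS_derive (Acoef n)) t)
      with (- PSeries (PS_derive (Acoef n)) t + - - / (1 - t)) by ring.
    exact Hd.
  - intros t Ht. assert (Hl := PSd_le n t ltac:(lra)). lra.
Qed.

Lemma caseB (n : nat) (x : R) : (1 <= n)%nat -> 0 <= x < 1 ->
  INR (n + 1) * (1 - x) < / exp 1 ->
  Tsum n x < - ln (INR (n + 1) * (1 - x)).
Proof.
  intros Hn Hx Hp.
  set (N := INR (n + 1)) in *.
  assert (HN : 2 <= N).
  { unfold N. replace 2 with (INR 2) by (simpl; ring). apply le_INR. lia. }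
  assert (HE : 2 < exp 1) by (assert (H := exp_ineq1 1 ltac:(lra)); lra).
  set (r0 := 1 - / (exp 1 * N)).
  assert (HEN : 0 < exp 1 * N) by nra.
  assert (Hinv : / (exp 1 * N) <= 1 / 4).
  { replace (1/4) with (/ 4) by field. apply Rinv_le_contravar; nra. }
  assert (Hinv0 : 0 < / (exp 1 * N)) by (apply Rinv_0_lt_compat; lra).
  assert (Hr0 : 0 <= r0 < 1) by (unfold r0; lra).
  assert (Hr0x : r0 <= x).
  { unfold r0. assert (1 - x < / (exp 1 * N)); [|lra].
    rewrite Rinv_mult. apply Rmult_lt_reg_l with N; [lra|].
    field_simplify; try lra. }
  assert (HC := caseC n r0 Hn Hr0).
  fold N in HC.
  assert (Hp0 : N * (1 - r0) = / exp 1) by (unfold r0; field; lra).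
  rewrite Hp0 in HC.
  assert (HT0 : Tsum n r0 < 1).
  { replace 1 with (/ (exp 1 * / exp 1)) by (field; lra). apply HC. lra. }
  assert (HM := Tsum_mono n r0 x (conj (proj1 Hr0) Hr0x) (proj2 Hx)).
  assert (Hl0 : ln (1 - r0) = - (1 + ln N)).
  { unfold r0. replace (1 - (1 - / (exp 1 * N))) with (/ (exp 1 * N)) by ring.
    rewrite ln_Rinv by lra. rewrite ln_mult by lra. rewrite ln_exp. ring. }
  rewrite Hl0 in HM.
  rewrite ln_mult by lra. lra.
Qed.

Theorem proposition10 (n : nat) (z : C) :
  (1 <= n)%nat -> Cmod z < 1 ->
  let p := INR (n + 1) * (1 - Cmod z) in
  Cmod (Rtail n z) < mfun p.
Proof.
  intros Hn Hz p.
  assert (Hx : 0 <= Cmod z < 1) by (split; [apply Cmod_ge_0|exact Hz]).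
  apply Rle_lt_trans with (1 := Rtail_le n z Hz).
  unfold mfun. destruct (Rle_dec (/ exp 1) p) as [H|H].
  - apply caseC; auto.
  - apply Rnot_le_lt in H.
    assert (Hp0 : 0 < p).
    { unfold p. apply Rmult_lt_0_compat. apply lt_0_INR. lia. lra. }
    assert (HE : 1 < exp 1) by (assert (H1 := exp_ineq1 1 ltac:(lra)); lra).
    assert (Hp1 : p < 1).
    { apply Rlt_trans with (1 := H). apply (Rmult_lt_reg_l (exp 1)); [lra|].
      rewrite Rinv_r by lra. lra. }
    assert (Hln : ln p < 0) by (rewrite <- ln_1; apply ln_increasing; lra).
    rewrite Rabs_left by lra.
    apply caseB; auto.
Qed.
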